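(* For all positive integers $n,d,k$, the value of the multiple-treasures-per-door search game satisfies $v_M(n,d,k)\le \frac kn$.
   Context: Multiple-treasures-per-door search game with parameters $(n,d,k)$: the hider places $d$ treasures behind $n$ doors, several treasures allowed behind the same door. In each round the searcher selects at most $k$ doors; if none of them hides a treasure not yet found, she loses; otherwise the hider reveals one not-yet-found treasure behind one of the selected doors (hider's choice). The searcher wins if she finds all $d$ treasures with a total of $d$ guesses. Players may randomize and the searcher may adapt to previous answers; $v_M(n,d,k)$ is the probability the searcher wins under optimal play by both. *)

(* Defs.v *)
From mathcomp Require Import all_boot all_order all_algebra.
From mathcomp Require Import boolp classical_sets reals.
Set Implicit Arguments. Unset Strict Implicit. Unset Printing Implicit Defensive.
Import Order.TTheory GRing.Theory Num.Theory.
Local Open Scope ring_scope.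
Local Open Scope classical_set_scope.

(* Multiple-treasures-per-door search game M(n,d,k).
   Doors are 'I_n.  A history is the chronological list of
   (queried set of doors, door revealed by the hider). *)
Definition history (n : nat) := seq ({set 'I_n} * 'I_n).

Definition searcher_strat (n : nat) := history n -> {set 'I_n}.

(* Hider pure strategy: a placement of d treasures (counts per door,
   several per door allowed) and a rule choosing which door to reveal
   given the history and the current query. *)
Record hider_strat (n d : nat) := HiderStrat {
  hplace : {ffun 'I_n -> nat};
  hplace_sum : (\sum_(i < n) hplace i)%N == d;
  hreveal : history n -> {set 'I_n} -> 'I_n }.

Definition take_one (n : nat) (c : {ffun 'I_n -> nat}) (j : 'I_n) :
  {ffun 'I_n -> nat} := [ffun i => if i == j then (c i).-1 else c i].

(* The door actually revealed: the hider's choice if it is legal (in the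
   query and still hiding an unfound treasure), otherwise some legal door.
   Thus every legal reveal behaviour is represented and no illegal one. *)
Definition revealed (n : nat) (c : {ffun 'I_n -> nat}) (S : {set 'I_n})
  (j0 : 'I_n) : 'I_n :=
  if (j0 \in S) && (0 < c j0)%N then j0
  else odflt j0 [pick j in S | (0 < c j)%N].

(* Play of t remaining rounds with remaining counts c; true = searcher wins.
   The searcher loses if she queries more than k doors or if her query
   contains no not-yet-found treasure. *)
Fixpoint play (n k : nat) (s : searcher_strat n)
  (r : history n -> {set 'I_n} -> 'I_n)
  (t : nat) (c : {ffun 'I_n -> nat}) (h : history n) : bool :=
  match t with
  | 0 => true
  | t'.+1 =>
      let S := s h in
      if (#|S| <= k)%N && [exists j in S, (0 < c j)%N] then
        let j := revealed c S (r h S) in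
        play k s r t' (take_one c j) (rcons h (S, j))
      else false
  end.

Definition searcher_wins (n d k : nat) (s : searcher_strat n)
  (x : hider_strat n d) : bool :=
  play k s (hreveal x) d (hplace x) [::].

(* Hider mixed strategy: finitely supported probability distribution on
   hider pure strategies, given as a weighted list. *)
Definition hider_mixed (R : realType) (n d : nat) :=
  seq (R * hider_strat n d).

Definition is_distr (R : realType) (n d : nat) (mu : hider_mixed R n d) :=
  all (fun p => 0 <= p.1) mu /\ \sum_(p <- mu) p.1 = 1.

Definition win_prob (R : realType) (n d k : nat) (mu : hider_mixed R n d)
  (s : searcher_strat n) : R :=
  \sum_(p <- mu) p.1 * (searcher_wins k s p.2)%:R.

Definition vM (R : realType) (n d k : nat) : R :=
  inf [set x : R | exists mu : hider_mixed R n d, is_distr mu /\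
         x = sup [set y : R | exists s : searcher_strat n, y = win_prob k mu s]].

(* Main.v *)
Require Import Defs.
From mathcomp Require Import all_boot all_order all_algebra.
From mathcomp Require Import boolp classical_sets reals.
Import Order.TTheory GRing.Theory Num.Theory.
Local Open Scope ring_scope.


Definition place (n d : nat) (j : 'I_n) : {ffun 'I_n -> nat} :=
  [ffun i => if i == j then d else 0%N].

Lemma place_sum (n d : nat) (j : 'I_n) : (\sum_(i < n) place n d j i)%N == d.
Proof.
rewrite (bigD1 j) //= big1 ?addn0 ?ffunE ?eqxx //.
by move=> i /negbTE ij; rewrite ffunE ij.
Qed.

Definition hs (n d : nat) (j : 'I_n) : hider_strat n d :=
  @HiderStrat n d (place n d j) (place_sum n d j) (fun _ _ => j).

Lemma wins_hs (n d : nat) (dpos : (0 < d)%N) k s (j : 'I_n) :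
  searcher_wins k s (hs n d j) ==> (j \in s [::]) && (#|s [::]| <= k)%N.
Proof.
rewrite /searcher_wins /=.
case: d dpos => // d' _ /=.
case: (#|s [::]| <= k)%N; last by rewrite andbF.
case: existsP => //= -[i /andP [iS]]; rewrite ffunE.
by case: eqP => [Eij | //]; rewrite -Eij iS implybT.
Qed.

Theorem claim8 (R : realType) (n d k : nat) :
  (0 < n)%N -> (0 < d)%N -> (0 < k)%N ->
  vM R n d k <= k%:R / n%:R.
Proof.
move=> n0 d0 k0.
set mu : hider_mixed R n d := [seq (n%:R^-1, hs n d j) | j <- enum 'I_n].
have wpE s : win_prob k mu s =
   \sum_(j < n) n%:R^-1 * (searcher_wins k s (hs n d j))%:R.
  by rewrite /win_prob big_map big_enum.
have wp0 (mu' : hider_mixed R n d) s : is_distr mu' -> 0 <= win_prob k mu' s.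
  move=> [H _]; rewrite /win_prob; elim: mu' H => [|p m IH] /=.
    by rewrite big_nil.
  by move=> /andP [p0 /IH H]; rewrite big_cons addr_ge0 // mulr_ge0.
have n0R : n%:R != 0 :> R by rewrite pnatr_eq0 -lt0n.
have Dmu : is_distr mu.
  split; first by rewrite all_map; apply/allP => j _ /=; rewrite invr_ge0.
  by rewrite big_map big_enum /= sumr_const card_ord -(mulr_natr (n%:R^-1 : R)) mulVf.
have supb : sup [set y : R | exists s : searcher_strat n, y = win_prob k mu s]
    <= k%:R / n%:R.
  apply: ge_sup; first by exists (win_prob k mu (fun _ => @finset.set0 'I_n)); exists (fun _ => @finset.set0 'I_n).
  move=> y [s ->]; rewrite wpE.
  apply: (@le_trans _ _ (\sum_(j < n) n%:R^-1 *
      ((j \in s [::]) && (#|s [::]| <= k)%N)%:R)).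
    apply: ler_sum => j _; rewrite ler_wpM2l ?invr_ge0 // ler_nat.
    by have := @wins_hs n d d0 k s j; case: searcher_wins; case: (_ && _).
  rewrite -mulr_sumr mulrC ler_wpM2r ?invr_ge0 //.
  case: (leqP #|s [::]| k) => Hk.
    rewrite (eq_bigr (fun j => (j \in s [::])%:R)); last by move=> j _; rewrite andbT.
    rewrite -natr_sum ler_nat (leq_trans _ Hk) // -sum1_card /=.
    rewrite [X in (_ <= X)%N]big_mkcond.
    by apply: leq_sum => j _; case: (j \in _).
  by rewrite big1 // => j _; rewrite andbF.
apply: (le_trans _ supb); rewrite /vM.
apply: ge_inf; last by exists mu.
exists 0 => x [mu' [Dmu' ->]].
have [hs'|nhs] := pselect (has_sup [set y : R | exists s : searcher_strat n, y = win_prob k mu' s]).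
  apply: le_trans (wp0 mu' (fun _ => @finset.set0 'I_n) Dmu') _.
  by apply: sup_upper_bound => //; exists (fun _ => @finset.set0 'I_n).
by rewrite sup_out.
Qed.
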